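(* Consider the system $x(k+1)=Ax(k)+Bu(k)+w(k)$ in closed loop with the control scheme described in the context (Algorithm ATCS with parameter $\lambda$), and suppose that the problem $\mathbb{P}_0(x(0),\{0\})$ is feasible. Then: (i) for every iteration $k=1,2,\ldots$ reached by the algorithm and for any disturbance realization with $w(k)\in\mathcal{W}$ for all $k$, the problem $\mathbb{P}_k(x(k),\mathcal{Z}_{f,k})$, with the terminal set $\mathcal{Z}_{f,k}$ defined according to the algorithm (and with the additional constraint $N_k\le N^*_{k-1}-1$ whenever the second branch of the algorithm is taken), is feasible; (ii) if the weights $\gamma_v,\gamma_z\ge 0$ are selected such that $$\bar\lambda = 1-\sup_{w\in\mathcal{W}}\Big\{\gamma_z\sum_{j=0}^{\infty}\|A_K^j w\|+\gamma_v\sum_{j=0}^{\infty}\|K A_K^j w\|\Big\}>0$$ and $\lambda=\bar\lambda$ is used in the algorithm, then the optimal cost decreases by at least $\bar\lambda$ at each step, i.e. $J^*_{k+1}\le J^*_k-\bar\lambda$ for all $k$.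
   Context: System: $x(k+1)=Ax(k)+Bu(k)+w(k)$ with $x(k)\in\mathbb{R}^n$, $u(k)\in\mathbb{R}^m$, disturbance $w(k)\in\mathcal{W}$; state/input constraints $x(k)\in\mathcal{X}(k)$, $u(k)\in\mathcal{U}(k)$, where $\mathcal{X}(k),\mathcal{U}(k),\mathcal{W}$ are convex sets. A reference trajectory $r(k)\in\mathbb{R}^n$ is given. $K\in\mathbb{R}^{m\times n}$ is such that $A_K=A+BK$ is Schur. $\mathcal{A}\oplus\mathcal{B}=\{a+b: a\in\mathcal{A},b\in\mathcal{B}\}$ (Minkowski sum), $\mathcal{A}\ominus\mathcal{B}=\{a: \{a\}\oplus\mathcal{B}\subseteq\mathcal{A}\}$ (Pontryagin difference). Define $\mathcal{S}(0)=\{0\}$ and $\mathcal{S}(j)=\bigoplus_{i=0}^{j-1}A_K^i\mathcal{W}$ for $j\ge1$; tightened sets $\mathcal{Z}_k(j)=\mathcal{X}(k+j)\ominus\mathcal{S}(j)$, $\mathcal{V}_k(j)=\mathcal{U}(k+j)\ominus K\mathcal{S}(j)$. Fix weights $\gamma_z,\gamma_v\ge0$ and a vector norm $\|\cdot\|$ (possibly weighted). Problem $\mathbb{P}_k(x(k),\mathcal{Z}_f)$, for a convex set $\mathcal{Z}_f$: minimize over $N_k\in\{1,2,\ldots\}$, $v_k(0),\ldots,v_k(N_k-1)$, $z_k(0),\ldots,z_k(N_k)$ the cost $J_k=N_k+\gamma_z\sum_{j=0}^{N_k}\|z_k(j)-r(k+j)\|+\gamma_v\sum_{j=0}^{N_k-1}\|v_k(j)\|$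 subject to $z_k(0)=x(k)$, $z_k(j+1)=Az_k(j)+Bv_k(j)$, $z_k(j)\in\mathcal{Z}_k(j)$ for $j=1,\ldots,N_k-1$, $v_k(j)\in\mathcal{V}_k(j)$ for $j=0,\ldots,N_k-1$, and $z_k(N_k)\in\{r(k+N_k)\}\oplus\mathcal{Z}_f$. Algorithm ATCS (parameter $\lambda$): at $k=0$ solve $\mathbb{P}_0(x(0),\{0\})$, obtaining $(J_0^*,N_0^*,v_0^*,z_0^* )$; set $\mathcal{Z}_{f,0}=\{0\}$, $\bar N=N_0^*$, apply $u(0)=v_0^*(0)$. Then, while $N^*_{k}>1$, increment $k$ and: solve $\mathbb{P}_k(x(k),\{0\})$ with optimal cost $\tilde J_k^*$ ($\tilde J_k^*=\infty$ if infeasible). If $\tilde J_k^*>J^*_{k-1}-\lambda$, set $\mathcal{Z}_{f,k}=\mathcal{Z}_{f,k-1}\oplus A_K^{N^*_{k-1}-1}\mathcal{W}$ and solve $\mathbb{P}_k(x(k),\mathcal{Z}_{f,k})$ with the additional constraint $N_k\le N^*_{k-1}-1$, letting its solution be $(J_k^*,N_k^*,v_k^*,z_k^* )$; otherwise let $(J_k^*,N_k^*,v_k^*,z_k^* )$ be the solution of $\mathbb{P}_k(x(k),\{0\})$, set $\mathcal{Z}_{f,k}=\{0\}$ and $\bar N=N_k^*$. Apply $u(k)=v_k^*(0)$, so $x(k+1)=Ax(k)+Bu(k)+w(k)$ with $w(k)\in\mathcal{W}$ arbitrary. Upon termination, return $\bar N$. *)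

(* Defs.v *)
From mathcomp Require Import all_boot all_algebra.
From mathcomp Require Import all_classical all_reals all_analysis.
From mathcomp Require Import complex.
Set Implicit Arguments. Unset Strict Implicit. Unset Printing Implicit Defensive.
Import GRing.Theory Num.Theory.
Local Open Scope classical_set_scope.
Local Open Scope ring_scope.
Local Open Scope ereal_scope.
Local Open Scope ring_scope.

Section ATCS.
Variable R : realType.

Definition msum (p : nat) (SA SB : set 'cV[R]_p) : set 'cV[R]_p :=
  [set a + b | a in SA & b in SB].

Definition pdiff (p : nat) (SA SB : set 'cV[R]_p) : set 'cV[R]_p :=
  [set a | msum [set a] SB `<=` SA].

Definition mimage (p q : nat) (M : 'M[R]_(q, p)) (S : set 'cV[R]_p) : set 'cV[R]_q :=
  (fun s => M *m s) @` S.

Definition cvx_set (p : nat) (S : set 'cV[R]_p) : Prop :=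
  forall x y, S x -> S y -> forall t : R, 0 <= t <= 1 -> S (t *: x + (1 - t) *: y).

Definition is_norm (p : nat) (nu : 'cV[R]_p -> R) : Prop :=
  [/\ forall x, 0 <= nu x,
      forall x, nu x = 0 -> x = 0,
      forall (a : R) x, nu (a *: x) = `|a| * nu x
    & forall x y, nu (x + y) <= nu x + nu y].

Definition schur (p : nat) (M : 'M[R]_p) : Prop :=
  forall l : R[i], eigenvalue (map_mx (real_complex R) M) l -> `|l| < 1.

Variables (n m : nat).
Variables (A : 'M[R]_n) (B : 'M[R]_(n, m)) (K : 'M[R]_(m, n)).
Variables (X : nat -> set 'cV[R]_n) (U : nat -> set 'cV[R]_m) (W : set 'cV[R]_n).
Variables (r : nat -> 'cV[R]_n) (gz gv : R).
Variables (nz : 'cV[R]_n -> R) (nv : 'cV[R]_m -> R).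

Definition AK : 'M[R]_n := A + B *m K.

Fixpoint Sset (j : nat) : set 'cV[R]_n :=
  match j with
  | 0 => [set 0]
  | j'.+1 => msum (Sset j') (mimage (AK ^+ j') W)
  end.

Definition Zt (k j : nat) : set 'cV[R]_n := pdiff (X (k + j)) (Sset j).
Definition Vt (k j : nat) : set 'cV[R]_m := pdiff (U (k + j)) (mimage K (Sset j)).

Definition feasible (k : nat) (x : 'cV[R]_n) (Zf : set 'cV[R]_n)
  (N : nat) (v : nat -> 'cV[R]_m) (z : nat -> 'cV[R]_n) : Prop :=
  [/\ (0 < N)%N,
      z 0%N = x,
      (forall j, (j < N)%N -> z j.+1 = A *m z j + B *m v j),
      (forall j, (1 <= j <= N.-1)%N -> Zt k j (z j)) /\
      (forall j, (j < N)%N -> Vt k j (v j))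
    & msum [set r (k + N)%N] Zf (z N)].

Definition cost (k N : nat) (v : nat -> 'cV[R]_m) (z : nat -> 'cV[R]_n) : R :=
  N%:R + gz * (\sum_(j < N.+1) nz (z j - r (k + j)%N))
       + gv * (\sum_(j < N) nv (v j)).

(* optimal value of P_k(x, Zf) with additional constraint P on N_k;
   +oo if infeasible *)
Definition optval (k : nat) (x : 'cV[R]_n) (Zf : set 'cV[R]_n) (P : nat -> Prop)
  : \bar R :=
  ereal_inf [set e | exists N v z, [/\ feasible k x Zf N v z, P N & e = (cost k N v z)%:E]].

Definition optimal (k : nat) (x : 'cV[R]_n) (Zf : set 'cV[R]_n) (P : nat -> Prop)
  (N : nat) (v : nat -> 'cV[R]_m) (z : nat -> 'cV[R]_n) : Prop :=
  [/\ feasible k x Zf N v z, P N & (cost k N v z)%:E = optval k x Zf P].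

(* An execution of Algorithm ATCS with parameter lam:
   x = state trajectory, w = disturbances, Ns/vs/zs = selected optimal
   solutions, Zf = terminal sets. *)
Variables (lam : R) (x w : nat -> 'cV[R]_n) (Ns : nat -> nat)
  (vs : nat -> nat -> 'cV[R]_m) (zs : nat -> nat -> 'cV[R]_n)
  (Zf : nat -> set 'cV[R]_n).

Definition Js (k : nat) : R := cost k (Ns k) (vs k) (zs k).

Definition branch1 (k : nat) : Prop :=
  (optval k (x k) [set 0%R] (fun _ => True) > (Js k.-1 - lam)%:E)%E.

Definition Zf_branch1 (k : nat) : set 'cV[R]_n :=
  msum (Zf k.-1) (mimage (AK ^+ (Ns k.-1).-1) W).

Definition step0 : Prop :=
  Zf 0%N = [set 0] /\
  optimal 0 (x 0%N) [set 0] (fun _ => True) (Ns 0%N) (vs 0%N) (zs 0%N).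

Definition step (k : nat) : Prop :=
  [/\ (1 < Ns k.-1)%N,
      W (w k.-1),
      x k = A *m x k.-1 + B *m vs k.-1 0%N + w k.-1,
      (branch1 k -> Zf k = Zf_branch1 k /\
        optimal k (x k) (Zf k) (fun N => (N <= (Ns k.-1).-1)%N) (Ns k) (vs k) (zs k))
    & (~ branch1 k -> Zf k = [set 0] /\
        optimal k (x k) [set 0] (fun _ => True) (Ns k) (vs k) (zs k))].

Definition run_upto (T : nat) : Prop :=
  step0 /\ forall k, (1 <= k <= T)%N -> step k.

End ATCS.

Definition dist_gain (R : realType) (n m : nat) (A : 'M[R]_n) (B : 'M[R]_(n, m))
  (K : 'M[R]_(m, n)) (W : set 'cV[R]_n) (gz gv : R)
  (nz : 'cV[R]_n -> R) (nv : 'cV[R]_m -> R) : \bar R :=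
  ereal_sup [set ((gz%:E * (\sum_(j <oo) (nz ((AK A B K) ^+ j *m w0))%:E))
                 + (gv%:E * (\sum_(j <oo) (nv (K *m ((AK A B K) ^+ j *m w0)))%:E)))%E
            | w0 in W].

(* Main.v *)
Require Import Defs.
From mathcomp Require Import all_boot all_algebra.
From mathcomp Require Import all_classical all_reals all_analysis.
From mathcomp Require Import complex.
Import GRing.Theory Num.Theory.
Local Open Scope classical_set_scope.
Local Open Scope ring_scope.

From mathcomp Require Import lra.
Import order.Order.TTheory.
Local Open Scope ring_scope.

Section H.
Context {R : realType} {n m : nat}
  {A : 'M[R]_n} {B : 'M[R]_(n, m)} {K : 'M[R]_(m, n)}
  {X : nat -> set 'cV[R]_n} {U : nat -> set 'cV[R]_m} {W : set 'cV[R]_n}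
  {r : nat -> 'cV[R]_n}.

Lemma AKS j : AK A B K ^+ j.+1 = A *m AK A B K ^+ j + B *m (K *m AK A B K ^+ j).
Proof. by rewrite exprS -mulmxE /AK mulmxDl mulmxA. Qed.

Lemma shift_feas {k x0 Zf0 N v z wk xk} :
  feasible A B K X U W r k x0 Zf0 N v z -> (1 < N)%N -> W wk ->
  xk = A *m x0 + B *m v 0%N + wk ->
  feasible A B K X U W r k.+1 xk (Defs.msum Zf0 (mimage (AK A B K ^+ N.-1) W)) N.-1
    (fun j => v j.+1 + K *m (AK A B K ^+ j *m wk))
    (fun j => z j.+1 + AK A B K ^+ j *m wk).
Proof.
case=> N0 z0 dyn [stC inC] term N1 Ww xkE.
split.
- by case: N N1 {N0 dyn stC inC term}.
- by rewrite expr0 mul1mx dyn // z0 xkE.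
- move=> j jN; rewrite dyn; last by case: N N1 jN {N0 dyn stC inC term}.
  by rewrite AKS !mulmxDr !mulmxDl !mulmxA !addrA; congr (_ + _); rewrite addrAC.
- split.
  + move=> j /andP[j1 jN] y [a /= -> [s Ss <-]].
    have := stC j.+1; rewrite /Zt /pdiff addSnnS; apply.
      by apply/andP; split => //; case: N N1 jN {N0 dyn stC inC term} => [|[|N]] //.
    exists (z j.+1) => //; exists (s + AK A B K ^+ j *m wk); last by rewrite addrAC addrA.
    by exists s => //; exists (AK A B K ^+ j *m wk) => //; exists wk.
  + move=> j jN y [a /= -> [s' [s Ss <-] <-]].
    have := inC j.+1; rewrite /Vt /pdiff addSnnS; apply.
      by case: N N1 jN {N0 dyn stC inC term}.
    exists (v j.+1) => //; exists (K *m (s + AK A B K ^+ j *m wk)); last first.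
      by rewrite mulmxDr addrAC addrA.
    exists (s + AK A B K ^+ j *m wk) => //.
    by exists s => //; exists (AK A B K ^+ j *m wk) => //; exists wk.
- have NE : N.-1.+1 = N by case: N N1 {N0 dyn stC inC term}.
  rewrite NE; case: term => a /= -> [f Zf <-].
  exists (r (k + N)%N) => //.
    by rewrite addSnnS NE.
  exists (f + AK A B K ^+ N.-1 *m wk); last by rewrite addrA.
  by exists f => //; exists (AK A B K ^+ N.-1 *m wk) => //; exists wk.
Qed.

Lemma run_feas {gz gv nz nv lam x w Ns vs zs Zf k} :
  run_upto A B K X U W r gz gv nz nv lam x w Ns vs zs Zf k ->
  feasible A B K X U W r k (x k) (Zf k) (Ns k) (vs k) (zs k).
Proof.
case=> [[Z0 [F0 _ _]] st]; case: k st => [|k] st; first by rewrite Z0.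
have [_ _ _ b1 b2] := st k.+1 (leqnn _).
case: (pselect (branch1 A B K X U W r gz gv nz nv lam x Ns vs zs k.+1)) => b.
  by have [_ [F _ _]] := b1 b.
by have [-> [F _ _]] := b2 b.
Qed.
End H.

Theorem theorem1 (R : realType) (n m : nat)
  (A : 'M[R]_n) (B : 'M[R]_(n, m)) (K : 'M[R]_(m, n))
  (X : nat -> set 'cV[R]_n) (U : nat -> set 'cV[R]_m) (W : set 'cV[R]_n)
  (r : nat -> 'cV[R]_n) (gz gv : R)
  (nz : 'cV[R]_n -> R) (nv : 'cV[R]_m -> R) (lam : R)
  (x w : nat -> 'cV[R]_n) (Ns : nat -> nat)
  (vs : nat -> nat -> 'cV[R]_m) (zs : nat -> nat -> 'cV[R]_n)
  (Zf : nat -> set 'cV[R]_n) :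
  schur (AK A B K) ->
  (forall k, cvx_set (X k)) -> (forall k, cvx_set (U k)) -> cvx_set W ->
  0 <= gz -> 0 <= gv -> is_norm nz -> is_norm nv ->
  (exists N v z, feasible A B K X U W r 0 (x 0%N) [set 0] N v z) ->
  (* (i) recursive feasibility *)
  (forall k, (1 <= k)%N ->
     run_upto A B K X U W r gz gv nz nv lam x w Ns vs zs Zf k.-1 ->
     (1 < Ns k.-1)%N ->
     W (w k.-1) ->
     x k = A *m x k.-1 + B *m vs k.-1 0%N + w k.-1 ->
     (branch1 A B K X U W r gz gv nz nv lam x Ns vs zs k ->
        exists N v z, feasible A B K X U W r k (x k) (Zf_branch1 A B K W Ns Zf k) N v z
                      /\ (N <= (Ns k.-1).-1)%N) /\
     (~ branch1 A B K X U W r gz gv nz nv lam x Ns vs zs k ->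
        exists N v z, feasible A B K X U W r k (x k) [set 0] N v z))
  /\
  (* (ii) cost decrease when lam = lambda_bar > 0 *)
  ((lam%:E = 1 - dist_gain A B K W gz gv nz nv)%E -> 0 < lam ->
   forall k, run_upto A B K X U W r gz gv nz nv lam x w Ns vs zs Zf k.+1 ->
     Js r gz gv nz nv Ns vs zs k.+1 <= Js r gz gv nz nv Ns vs zs k - lam).

Proof.
move=> _ _ _ _ gz0 gv0 [nz0 _ _ nzT] [nv0 _ _ nvT] _; split.
  move=> [//|k] _ run N1 Ww xE /=; split.
    move=> b; exists (Ns k).-1; do 2 eexists; split; last exact: leqnn.
    exact: shift_feas (run_feas run) N1 Ww xE.
  move=> nb; apply: contrapT => nf; apply: nb.
  rewrite /branch1 /optval.
  have -> : [set e | exists N v z, [/\ feasible A B K X U W r k.+1 (x k.+1) [set 0] N v z,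
      True & e = (cost r gz gv nz nv k.+1 N v z)%:E]] = set0.
    by apply/seteqP; split => e // [N [v [z [F _ _]]]]; apply: nf; exists N, v, z.
  by rewrite ereal_inf0 ltey.
move=> lamE lam0 k run.
have runk : run_upto A B K X U W r gz gv nz nv lam x w Ns vs zs Zf k.
  by case: run => S0 st; split => // j /andP[j1 jk]; apply: st; rewrite j1 /= ltnW.
have [S0 st] := run.
have [N1 Ww xE b1 b2] := st k.+1 (leqnn _).
case: (pselect (branch1 A B K X U W r gz gv nz nv lam x Ns vs zs k.+1)) => b; last first.
  have [_ [_ _ opt]] := b2 b.
  rewrite -lee_fin /Js opt; move: b; rewrite /branch1 => /negP.
  by rewrite -leNgt.
have [ZfE [_ _ opt]] := b1 b.
have F := shift_feas (run_feas runk) N1 Ww xE.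
set N' := (Ns k).-1 in F.
set v' := (fun j => _) in F; set z' := (fun j => _) in F.
rewrite -lee_fin /Js opt.
apply: (@le_trans _ _ (cost r gz gv nz nv k.+1 N' v' z')%:E).
  apply: ereal_inf_lbound; exists N', v', z'; split => //.
  by rewrite ZfE.
rewrite lee_fin.
set AKm := AK A B K.
set Pz := \sum_(j < N'.+1) nz (AKm ^+ j *m w k).
set Pv := \sum_(j < N') nv (K *m (AKm ^+ j *m w k)).
have dg : ((gz * Pz + gv * Pv)%:E <= dist_gain A B K W gz gv nz nv)%E.
  apply: (@le_trans _ _ (gz%:E * (\sum_(j <oo) (nz ((AK A B K) ^+ j *m w k))%:E)
                 + gv%:E * (\sum_(j <oo) (nv (K *m ((AK A B K) ^+ j *m w k)))%:E))%E); last first.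
    by apply: ereal_sup_ubound; exists (w k).
  rewrite EFinD !EFinM; apply: leeD; apply: lee_wpmul2l; rewrite ?lee_fin //.
    rewrite /Pz -sumEFin -(big_mkord xpredT (fun j => (nz (AKm ^+ j *m w k))%:E)).
    by apply: nneseries_lim_ge => i _ _; rewrite lee_fin.
  rewrite /Pv -sumEFin -(big_mkord xpredT (fun j => (nv (K *m (AKm ^+ j *m w k)))%:E)).
  by apply: nneseries_lim_ge => i _ _; rewrite lee_fin.
have dgE : dist_gain A B K W gz gv nz nv = (1 - lam)%:E.
  move: lamE; case: (dist_gain A B K W gz gv nz nv) => // d.
  by move=> [->]; rewrite opprB addrCA subrr addr0.
rewrite dgE lee_fin in dg.
have NE : Ns k = N'.+1 by rewrite /N'; case: (Ns k) N1.
have h1 : \sum_(j < N'.+1) nz (z' j - r (k.+1 + j)%N) <=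
    \sum_(i < N'.+1) nz (zs k (bump 0 i) - r (k + bump 0 i)%N) + Pz.
  rewrite /Pz -big_split /=; apply: ler_sum => j _.
  by rewrite /z' /bump /= add1n addSn addnS addrAC nzT.
have h2 : \sum_(j < N') nv (v' j) <= \sum_(i < N') nv (vs k (bump 0 i)) + Pv.
  rewrite /Pv -big_split /=; apply: ler_sum => j _.
  by rewrite /v' /bump /= add1n nvT.
have h1' := ler_wpM2l gz0 h1; have h2' := ler_wpM2l gv0 h2.
rewrite !mulrDr in h1' h2'.
have h3 : 0 <= gz * nz (zs k 0%N - r (k + 0)%N) by rewrite mulr_ge0.
have h4 : 0 <= gv * nv (vs k 0%N) by rewrite mulr_ge0.
have ez : \sum_(j < N'.+2) nz (zs k j - r (k + j)%N) = nz (zs k 0%N - r (k + 0)%N)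
   + \sum_(i < N'.+1) nz (zs k (bump 0 i) - r (k + bump 0 i)%N) by rewrite big_ord_recl.
have ev : \sum_(j < N'.+1) nv (vs k j) = nv (vs k 0%N)
   + \sum_(i < N') nv (vs k (bump 0 i)) by rewrite big_ord_recl.
rewrite /cost NE ez ev -natr1 !mulrDr; lra.
Qed.
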